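(* Let $A\in\mathbb R^{m\times n}$, $b\in\mathbb R^m$, $p\in[0,1]^n$ and $k\in\mathbb N$, and let $\bar X_1,\dots,\bar X_k\in\{0,1\}^n$ be independent random vectors, each having independent entries with $\Pr((\bar X_l)_i=1)=p_i$. Let $\gamma(p):=\min_{j\in[m]}\{\langle A_j,p\rangle-b_j\}$, where $A_j$ is the $j$-th row of $A$, let $\gamma_+(p):=\max\{\gamma(p),0\}$, and let $\eta:=\max_{j\in[m]}\|A_j\|_2$. Then \[\phi(p,k):=\Pr\big(\exists\,l\in[k]:\ A\bar X_l\ge b\big)\ge1-\exp\!\left(-2k\left[\frac{\gamma_+^2(p)}{\eta^2}-\frac{\log m}{2}\right]_+\right),\] where $[t]_+:=\max\{t,0\}$.
   Context: $[k]=\{1,\dots,k\}$; inequalities between vectors are componentwise. *)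

(* Defs.v *)
From HB Require Import structures.
From mathcomp Require Import all_boot all_order all_algebra.
From mathcomp Require Import all_classical all_reals all_analysis.
Set Implicit Arguments. Unset Strict Implicit. Unset Printing Implicit Defensive.
Import Order.TTheory GRing.Theory Num.Theory.
Local Open Scope ring_scope.

Section Defs.
Variable R : realType.

(* minimum of a finite family indexed by 'I_m (0 if m = 0; only used for m > 0) *)
Definition fmin (m : nat) (f : 'I_m -> R) : R :=
  if [pick j : 'I_m] is Some j0 then \big[Num.min/f j0]_(j < m) f j else 0.

Definition pos_part (t : R) : R := Num.max t 0.

Definition rowdot m n (A : 'M[R]_(m, n)) (j : 'I_m) (x : 'I_n -> R) : R :=
  \sum_(i < n) A j i * x i.

Definition gamma_min m n (A : 'M[R]_(m, n)) (b : 'I_m -> R) (p : 'I_n -> R) : R :=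
  fmin (fun j => rowdot A j p - b j).

Definition eta_max m n (A : 'M[R]_(m, n)) : R :=
  \big[Num.max/0]_(j < m) Num.sqrt (\sum_(i < n) A j i ^+ 2).

(* probability of the outcome X = (X_1,...,X_k) in {0,1}^(k x n) when all
   entries are independent with Pr((X_l)_i = 1) = p_i (product law) *)
Definition prod_weight k n (p : 'I_n -> R) (X : {ffun 'I_k -> {ffun 'I_n -> bool}}) : R :=
  \prod_(l < k) \prod_(i < n) (if X l i then p i else 1 - p i).

Definition some_feasible m n k (A : 'M[R]_(m, n)) (b : 'I_m -> R)
    (X : {ffun 'I_k -> {ffun 'I_n -> bool}}) : bool :=
  [exists l : 'I_k, [forall j : 'I_m, b j <= rowdot A j (fun i => (X l i)%:R)]].

Definition phi m n (A : 'M[R]_(m, n)) (b : 'I_m -> R) (p : 'I_n -> R) (k : nat) : R :=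
  \sum_(X : {ffun 'I_k -> {ffun 'I_n -> bool}} | some_feasible A b X) prod_weight p X.

End Defs.

(* Main.v *)
Require Import Defs.
From HB Require Import structures.
From mathcomp Require Import all_boot all_order all_algebra.
From mathcomp Require Import all_classical all_reals all_analysis.
From mathcomp Require Import ring lra.
Import Order.TTheory GRing.Theory Num.Theory.
Local Open Scope ring_scope.

Lemma bigmin_le_seq (R : realType) (I : eqType) (r : seq I) (P : pred I) (f : I -> R) x0 j :
  j \in r -> P j -> \big[Num.min/x0]_(i <- r | P i) f i <= f j.
Proof.
elim: r => [//|i r IH]; rewrite inE big_cons => /orP[/eqP<-|jr] Pj.
  by rewrite Pj ge_min lexx.
case: (P i); last exact: IH.
by rewrite ge_min IH ?orbT.
Qed.

Lemma le_bigmax_seq (R : realType) (I : eqType) (r : seq I) (P : pred I) (f : I -> R) x0 j :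
  j \in r -> P j -> f j <= \big[Num.max/x0]_(i <- r | P i) f i.
Proof.
elim: r => [//|i r IH]; rewrite inE big_cons => /orP[/eqP<-|jr] Pj.
  by rewrite Pj le_max lexx.
case: (P i); last exact: IH.
by rewrite le_max IH ?orbT.
Qed.

Lemma fmin_le (R : realType) m (f : 'I_m -> R) j : fmin f <= f j.
Proof.
rewrite /fmin; case: pickP => [j0 _|/(_ j)//].
exact: bigmin_le_seq (mem_index_enum j) _.
Qed.

Lemma eta_bound (R : realType) m n (A : 'M[R]_(m, n)) j :
  \sum_(i < n) A j i ^+ 2 <= eta_max A ^+ 2.
Proof.
have S0 : 0 <= \sum_(i < n) A j i ^+ 2 by apply: sumr_ge0 => i _; exact: sqr_ge0.
rewrite -{1}(sqr_sqrtr S0).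
have h1 : Num.sqrt (\sum_(i < n) A j i ^+ 2) <= eta_max A.
  exact: le_bigmax_seq (mem_index_enum j) _.
have h0 := sqrtr_ge0 (\sum_(i < n) A j i ^+ 2).
by apply: lerXn2r => //; rewrite nnegrE // (le_trans h0 h1).
Qed.

Lemma sum_prod_bool (R : realType) n (F : 'I_n -> bool -> R) :
  \sum_(x : {ffun 'I_n -> bool}) \prod_(i < n) F i (x i) = \prod_(i < n) (F i true + F i false).
Proof.
rewrite -bigA_distr_bigA; apply: eq_bigr => i _; by rewrite big_bool.
Qed.
Lemma ndecr_of_deriv (R : realType) (f f' : R -> R) (x y : R) :
  (forall z : R, is_derive z 1 f (f' z)) -> (forall z, x <= z <= y -> 0 <= f' z) ->
  x <= y -> f x <= f y.
Proof.
move=> df pos xy.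
have dv : forall z : R, derivable f z 1 by move=> z; exact: (@ex_derive _ _ _ _ _ _ _ (df z)).
apply: (@ger0_derive1_ndecr R f x y).
- by move=> z _; exact: dv.
- move=> z; rewrite in_itv /= => /andP[h1 h2].
  by rewrite derive1E (@derive_val _ _ _ _ _ _ _ (df z)) pos // (ltW h1) (ltW h2).
- by apply: derivable_within_continuous => z _; exact: dv.
- exact: lexx.
- exact: xy.
- exact: lexx.
Qed.

Lemma nincr_of_deriv (R : realType) (f f' : R -> R) (x y : R) :
  (forall z : R, is_derive z 1 f (f' z)) -> (forall z, x <= z <= y -> f' z <= 0) ->
  x <= y -> f y <= f x.
Proof.
move=> df neg xy.
suff : - f x <= - f y by rewrite lerN2.
apply: (@ndecr_of_deriv R (- f) (fun z => - f' z)) => //.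
- by move=> z /neg; rewrite oppr_ge0.
Qed.

Section H.
Variable R : realType.
Variable p : R.
Hypothesis p0 : 0 <= p.
Hypothesis p1 : p <= 1.

Definition D (h : R) : R := 1 - p + p * expR h.

Lemma D_gt0 h : 0 < D h.
Proof.
rewrite /D; have := expR_gt0 h; case: (ltP p 1) => hp e.
  have : 0 <= p * expR h by rewrite mulr_ge0 // ltW.
  lra.
have -> : p = 1 by apply/eqP; rewrite eq_le p1.
by rewrite subrr add0r mul1r.
Qed.

Lemma is_derive_D (h : R) : is_derive h 1 D (p * expR h).
Proof.
have H := is_deriveD (is_derive_cst (1-p) h 1) (is_deriveM (is_derive_cst p h 1) (is_derive_expR h)).
have -> : D = cst (1-p) + cst p * expR by apply/funext => x.
apply: is_derive_eq H _.
by rewrite /= scaler0 addr0 add0r.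
Qed.

Definition g1 (h : R) : R := h / 4 + p - p * expR h / D h.
Definition g2 (h : R) : R := 1/4 - (p * expR h / D h - (p * expR h / D h)^+2).

Lemma is_derive_g1 (h : R) : is_derive h 1 g1 (g2 h).
Proof.
have Dn0 : D h != 0 by rewrite gt_eqF // D_gt0.
have HV := is_deriveV Dn0 (is_derive_D h).
have HE := is_deriveM (is_derive_cst p h 1) (is_derive_expR h).
have HM := is_deriveM HE HV.
have HL := is_deriveM (@is_derive_id _ _ h 1) (is_derive_cst (1/4 : R) h 1).
have H := is_deriveB (is_deriveD HL (is_derive_cst p h 1)) HM.
have -> : g1 = (id * cst (1/4) + cst p) - (cst p * expR) * (fun y => (D y)^-1).
  by apply/funext => x; rewrite /g1 /= mul1r.
apply: is_derive_eq H _.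
have sM : forall a b : R, a *: b = a * b by [].
rewrite !scaler0 scaler1 !addr0 add0r /= !sM.
change ((cst p * expR) h) with (p * expR h).
rewrite /g2.
by field.
Qed.

Lemma g2_ge0 h : 0 <= g2 h.
Proof.
rewrite /g2; set u := p * expR h / D h.
have -> : 1/4 - (u - u^+2) = (u - 1/2)^+2 by field.
exact: sqr_ge0.
Qed.

Lemma g1_0 : g1 0 = 0.
Proof. by rewrite /g1 /D expR0 mulr1 subrK divr1 mul0r add0r subrr. Qed.

Definition g (h : R) : R := h^+2 / 8 + h * p - ln (D h).

Lemma is_derive_g (h : R) : is_derive h 1 g (g1 h).
Proof.
have HL := is_derive1_ln (D_gt0 h).
have HC := is_derive1_comp HL (is_derive_D h).
have HX := is_deriveM (is_deriveX 2 (@is_derive_id _ _ h 1)) (is_derive_cst (1/8 : R) h 1).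
have HP := is_deriveM (@is_derive_id _ _ h 1) (is_derive_cst p h 1).
have H := is_deriveB (is_deriveD HX HP) HC.
have -> : g = (id ^+ 2 * cst (1/8) + id * cst p) - ((@ln R) \o D).
  by apply/funext => x; rewrite /g /= mul1r.
apply: is_derive_eq H _.
have sM : forall a b : R, a *: b = a * b by [].
rewrite !scaler0 !add0r /= !sM.
rewrite /g1.
have Dn0 : D h != 0 by rewrite gt_eqF // D_gt0.
rewrite expr1 !mulr1 (mulrC (D h)^-1). congr (_ + _ - _). by field.
Qed.

Lemma g_ge0 h : 0 <= g h.
Proof.
have g0 : g 0 = 0 by rewrite /g /D expR0 mulr1 subrK ln1 expr0n /= mul0r mul0r !subr0 addr0.
have g1pos : forall z, 0 <= z -> 0 <= g1 z.
  move=> z z0; have := @ndecr_of_deriv R g1 g2 0 z is_derive_g1 (fun w _ => g2_ge0 w) z0.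
  by rewrite g1_0.
have g1neg : forall z, z <= 0 -> g1 z <= 0.
  move=> z z0; have := @ndecr_of_deriv R g1 g2 z 0 is_derive_g1 (fun w _ => g2_ge0 w) z0.
  by rewrite g1_0.
case: (leP 0 h) => h0.
  have := @ndecr_of_deriv R g g1 0 h is_derive_g _ h0; rewrite g0; apply.
  by move=> z /andP[z0 _]; apply: g1pos.
have := @nincr_of_deriv R g g1 h 0 is_derive_g _ (ltW h0); rewrite g0; apply.
by move=> z /andP[_ z0]; apply: g1neg.
Qed.

Lemma hoeffding_bern h : D h <= expR (h^+2 / 8 + h * p).
Proof.
have := g_ge0 h; rewrite /g subr_ge0 => H.
rewrite -[D h]lnK; last by rewrite posrE D_gt0.
by rewrite ler_expR.
Qed.
End H.
Section Main.
Variables (R : realType) (m n : nat) (A : 'M[R]_(m, n)) (b : 'I_m -> R) (p : 'I_n -> R).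
Hypothesis hp : forall i, 0 <= p i <= 1.

Definition w (x : {ffun 'I_n -> bool}) : R := \prod_(i < n) (if x i then p i else 1 - p i).

Lemma w_ge0 x : 0 <= w x.
Proof.
apply: prodr_ge0 => i _; have /andP[h0 h1] := hp i.
by case: (x i) => //; rewrite subr_ge0.
Qed.

Lemma w_sum : \sum_x w x = 1.
Proof.
rewrite /w (@sum_prod_bool R n (fun i (c : bool) => if c then p i else 1 - p i)).
by rewrite big1 // => i _; rewrite subrKC.
Qed.

Lemma fail_bound j (s : R) : 0 <= s ->
  \sum_(x : {ffun 'I_n -> bool} | rowdot A j (fun i => (x i)%:R) < b j) w x <=
  expR (s * (b j - rowdot A j p) + s ^+ 2 / 8 * \sum_(i < n) A j i ^+ 2).
Proof.
move=> s0.
apply: (@le_trans _ _ (\sum_(x : {ffun 'I_n -> bool}) w x * expR (s * (b j - rowdot A j (fun i => (x i)%:R))))).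
  rewrite big_mkcond; apply: ler_sum => x _; case: ifP => H.
    apply: ler_peMr; first exact: w_ge0.
    apply: le_trans (expR_ge1Dx _); rewrite lerDl.
    by rewrite mulr_ge0 // subr_ge0 ltW.
  by rewrite mulr_ge0 ?w_ge0 // ltW ?expR_gt0.
have E : forall x : {ffun 'I_n -> bool},
    w x * expR (s * (b j - rowdot A j (fun i => (x i)%:R))) =
    expR (s * b j) * \prod_(i < n) ((if x i then p i else 1 - p i) *
                                    expR (- (s * (A j i * (x i)%:R)))).
  move=> x; rewrite /w /rowdot mulrBr expRD mulr_sumr -sumrN expR_sum big_split /=.
  by rewrite mulrCA.
rewrite (eq_bigr _ (fun x _ => E x)) -mulr_sumr.
rewrite (@sum_prod_bool R n (fun i (c : bool) => (if c then p i else 1 - p i) * expR (- (s * (A j i * c%:R))))).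
apply: (@le_trans _ _ (expR (s * b j) * \prod_(i < n) expR ((- (s * A j i))^+2 / 8 + (- (s * A j i)) * p i))).
  apply: ler_wpM2l; first exact: ltW (expR_gt0 _).
  apply: ler_prod => i _; have /andP[pi0 pi1] := hp i; apply/andP; split.
    by apply: addr_ge0; apply: mulr_ge0; rewrite ?subr_ge0 // ltW // expR_gt0.
  have := @hoeffding_bern R (p i) pi0 pi1 (- (s * A j i)); rewrite /D.
  by rewrite /= mulr1 mulr0 mulr0 oppr0 expR0 mulr1 addrC.
rewrite -expR_sum -expRD ler_expR /rowdot big_split /= mulrBr.
have e1 : \sum_(i < n) (- (s * A j i))^+2 / 8 = s^+2 / 8 * \sum_(i < n) A j i ^+ 2.
  by rewrite mulr_sumr; apply: eq_bigr => i _; field.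
have e2 : \sum_(i < n) (- (s * A j i)) * p i = - (s * \sum_(i < n) A j i * p i).
  by rewrite mulr_sumr -sumrN; apply: eq_bigr => i _; ring.
rewrite e1 e2; lra.
Qed.

Definition feas (x : {ffun 'I_n -> bool}) : bool :=
  [forall j : 'I_m, b j <= rowdot A j (fun i => (x i)%:R)].
Definition qfail : R := \sum_(x : {ffun 'I_n -> bool} | ~~ feas x) w x.

Lemma qfail_ge0 : 0 <= qfail.
Proof. by apply: sumr_ge0 => x _; exact: w_ge0. Qed.

Lemma qfail_le : qfail <=
  \sum_(j < m) \sum_(x : {ffun 'I_n -> bool} | rowdot A j (fun i => (x i)%:R) < b j) w x.
Proof.
rewrite (eq_bigr _ (fun j _ => big_mkcond _ _)) exchange_big /=.
rewrite /qfail big_mkcond; apply: ler_sum => x _; case: ifP => Hf.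
  move: Hf; rewrite /feas negb_forall => /existsP [j Hj]; rewrite -ltNge in Hj.
  rewrite (bigD1 j) //= Hj; apply: ler_wpDr => //.
  by apply: sumr_ge0 => i _; case: ifP => // _; exact: w_ge0.
by apply: sumr_ge0 => i _; case: ifP => // _; exact: w_ge0.
Qed.

Lemma phi_eq k : phi A b p k = 1 - qfail ^+ k.
Proof.
have tot : \sum_(X : {ffun 'I_k -> {ffun 'I_n -> bool}}) prod_weight p X = 1.
  transitivity (\sum_(X : {ffun 'I_k -> {ffun 'I_n -> bool}}) \prod_(l < k) w (X l)) => //.
  by rewrite -(bigA_distr_bigA (fun (l : 'I_k) (x : {ffun 'I_n -> bool}) => w x)) big1 // => l _; exact: w_sum.
have neg : \sum_(X : {ffun 'I_k -> {ffun 'I_n -> bool}} | ~~ some_feasible A b X) prod_weight p X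
    = qfail ^+ k.
  transitivity (\sum_(X in ffun_on (fun x => ~~ feas x)) \prod_(l < k) w (X l)).
    apply: eq_big => X //.
    rewrite /some_feasible negb_exists; apply/forallP/ffun_onP => H l; exact: (H l).
  by rewrite -(bigA_distr_big (fun x : {ffun 'I_n -> bool} => ~~ feas x) (fun (l : 'I_k) (x : {ffun 'I_n -> bool}) => w x)) prodr_const card_ord.
by move: tot; rewrite (bigID (some_feasible A b)) /= neg => <-; rewrite addrK.
Qed.
End Main.

Theorem mainTheorem7 (R : realType) (m n k : nat) (A : 'M[R]_(m, n))
    (b : 'I_m -> R) (p : 'I_n -> R)
    (hm : (0 < m)%N) (hp : forall i, 0 <= p i <= 1) :
  phi A b p k >=
  1 - expR (- (2 * k%:R) *
             pos_part (pos_part (gamma_min A b p) ^+ 2 / eta_max A ^+ 2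
                       - ln (m%:R) / 2)).
Proof.
set g := gamma_min A b p; set e := eta_max A.
set B := pos_part g ^+ 2 / e ^+ 2 - ln (m%:R) / 2.
have [Ble|Bgt] := leP B 0.
  have -> : pos_part B = 0 by rewrite /pos_part max_r.
  rewrite mulr0 expR0 subrr.
  apply: sumr_ge0 => X _; apply: prodr_ge0 => l _; apply: prodr_ge0 => i _.
  have /andP[h0 h1] := hp i; by case: (X l i) => //; rewrite subr_ge0.
have -> : pos_part B = B by rewrite /pos_part max_l // ltW.
have lnm0 : 0 <= ln (m%:R : R) by apply: ln_ge0; rewrite ler1n.
have Q0 : 0 < pos_part g ^+ 2 / e ^+ 2 by move: Bgt; rewrite /B; lra.
have e0 : e ^+ 2 != 0.
  by apply/eqP => E; move: Q0; rewrite E invr0 mulr0 ltxx.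
have en0 : e != 0 by apply: contraNneq e0 => ->; rewrite expr0n.
have g0 : 0 < g.
  rewrite ltNge; apply/negP => gle; move: Q0.
  by rewrite /pos_part max_r // expr0n /= mul0r ltxx.
have Pg : pos_part g = g by rewrite /pos_part max_l // ltW.
set s := 4 * g / e ^+ 2.
have e2 : 0 < e ^+ 2 by rewrite lt_neqAle eq_sym e0 sqr_ge0.
have s0 : 0 <= s by rewrite /s divr_ge0 // ?sqr_ge0 // mulr_ge0 // ltW.
have Sj : forall j, \sum_(x : {ffun 'I_n -> bool} | rowdot A j (fun i => (x i)%:R) < b j) @w R n p x
    <= expR (- 2 * g ^+ 2 / e ^+ 2).
  move=> j; apply: le_trans (@fail_bound R m n A b p hp j s s0) _; rewrite ler_expR.
  have h1 : g <= rowdot A j p - b j by exact: (@fmin_le R m (fun j => rowdot A j p - b j) j).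
  have h2 := @eta_bound R m n A j.
  have t1 : s * (b j - rowdot A j p) <= s * (- g) by apply: ler_wpM2l => //; lra.
  have t2 : s ^+ 2 / 8 * \sum_(i < n) A j i ^+ 2 <= s ^+ 2 / 8 * e ^+ 2.
    by apply: ler_wpM2l => //; rewrite divr_ge0 // sqr_ge0.
  have t3 : s * (- g) + s ^+ 2 / 8 * e ^+ 2 = - 2 * g ^+ 2 / e ^+ 2.
    by rewrite /s; field.
  rewrite -t3; exact: lerD t1 t2.
have qb : @qfail R m n A b p <= expR (- 2 * B).
  apply: le_trans (@qfail_le R m n A b p hp) _.
  apply: le_trans (ler_sum _ (fun j _ => Sj j)) _.
  rewrite sumr_const card_ord.
  have mE : forall c : R, c *+ m = expR (ln (m%:R : R)) * c.
    by move=> c; rewrite lnK ?posrE ?ltr0n // mulr_natl.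
  rewrite mE -expRD ler_expR /B Pg.
  by rewrite le_eqVlt; apply/orP; left; apply/eqP; field.
rewrite (@phi_eq R m n A b p k) lerD2l lerN2.
have -> : - (2 * k%:R) * B = k%:R * (- 2 * B) by ring.
rewrite expRM_natl; apply: lerXn2r => //; rewrite ?nnegrE ?(@qfail_ge0 R m n A b p hp) //.
Qed.
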